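(* Let $T$ be Takagi's function on $[0,1]$, $T(x)=\sum_{n=1}^\infty 2^{-n}\phi^{(n)}(x)$, with $\phi(x)=2x$ on $[0,1/2]$, $\phi(x)=2-2x$ on $[1/2,1]$. Let $S_\infty=\{x\in[0,1]:T'(x)=+\infty\}$ and $S_{-\infty}=\{x\in[0,1]:T'(x)=-\infty\}$. Then $\dim_H S_\infty=\dim_H S_{-\infty}=1$, where $\dim_H$ denotes Hausdorff dimension.
   Context: $T'(x)=\pm\infty$ means the two-sided limit $\lim_{h\to0}(T(x+h)-T(x))/h$ equals $\pm\infty$. *)

(* Defs.v *)
From Stdlib Require Import Reals.
From Coquelicot Require Import Coquelicot.
Open Scope R_scope.

Definition tent (x : R) : R := if Rle_dec x (1/2) then 2 * x else 2 - 2 * x.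

Definition tent_iter (n : nat) (x : R) : R := Nat.iter n tent x.

Definition takagi (x : R) : R :=
  Series (fun n : nat => (/ 2) ^ (S n) * tent_iter (S n) x).

(* T'(x) = +oo : (T(x+h)-T(x))/h -> +oo as h -> 0 (h <> 0, x+h in [0,1],
   the domain of T). *)
Definition deriv_pinfty (f : R -> R) (x : R) : Prop :=
  forall M : R, exists d : R, 0 < d /\
    forall h : R, h <> 0 -> Rabs h < d -> 0 <= x + h <= 1 ->
      M < (f (x + h) - f x) / h.

Definition deriv_minfty (f : R -> R) (x : R) : Prop :=
  forall M : R, exists d : R, 0 < d /\
    forall h : R, h <> 0 -> Rabs h < d -> 0 <= x + h <= 1 ->
      (f (x + h) - f x) / h < M.

Definition S_pinf : R -> Prop := fun x => 0 <= x <= 1 /\ deriv_pinfty takagi x.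
Definition S_minf : R -> Prop := fun x => 0 <= x <= 1 /\ deriv_minfty takagi x.

(* Diameter of a subset of R (m_infty for the empty set). *)
Definition diam (U : R -> Prop) : Rbar :=
  Lub_Rbar (fun r => exists x y, U x /\ U y /\ r = Rabs (x - y)).

(* |U|^s, with the convention that the empty set contributes 0 and 0^0 = 1. *)
Definition diam_pow (s : R) (U : R -> Prop) : R :=
  match diam U with
  | Finite d => if Req_EM_T d 0 then (if Req_EM_T s 0 then 1 else 0) else Rpower d s
  | _ => 0
  end.

Definition hausdorff_content (s delta : R) (A : R -> Prop) : Rbar :=
  Glb_Rbar (fun v : R => exists U : nat -> (R -> Prop),
    (forall x, A x -> exists i, U i x) /\
    (forall i, Rbar_le (diam (U i)) (Finite delta)) /\
    is_series (fun i => diam_pow s (U i)) v).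

Definition hausdorff_measure (s : R) (A : R -> Prop) : Rbar :=
  Lub_Rbar (fun v : R => exists delta, 0 < delta /\
    Rbar_le (Finite v) (hausdorff_content s delta A)).

Definition hausdorff_dim (A : R -> Prop) : Rbar :=
  Glb_Rbar (fun s : R => 0 <= s /\ hausdorff_measure s A = Finite 0).

(* Main.v *)
Require Import Defs.
From Stdlib Require Import Reals Lra Lia Bool List ClassicalEpsilon Classical.
From Coquelicot Require Import Coquelicot.
Open Scope R_scope.


Lemma geom_is : is_series (fun n => (/2)^(S n)) 1.
Proof.
  assert (H := is_series_geom (/2)). 
  assert (Habs : Rabs (/2) < 1) by (rewrite Rabs_pos_eq; lra).
  specialize (H Habs).
  apply is_series_scal_l with (c := /2) in H.
  replace 1 with (scal (/2) (/ (1 - /2))) by (unfold scal; simpl; unfold mult; simpl; field).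
  eapply is_series_ext; [|exact H]. intros n. simpl. unfold scal; simpl; unfold mult; simpl. ring.
Qed.

Lemma geom_ex : ex_series (fun n => (/2)^(S n)).
Proof. eexists; apply geom_is. Qed.

Lemma Series_ge_term (a : nat -> R) i :
  ex_series a -> (forall n, 0 <= a n) -> a i <= Series a.
Proof.
  intros He Hp. rewrite (Series_incr_n a (S i)) by (lia || auto). simpl pred.
  assert (0 <= Series (fun k => a (S i + k)%nat)).
  { assert (Series (fun _ => 0) = 0).
    { transitivity (0 * Series a); [|ring]. rewrite <- (Series_scal_l 0 a). apply Series_ext; intros; ring. }
    rewrite <- H. apply Series_le.
    - intros; split; [lra| apply Hp].
    - apply (ex_series_incr_n a (S i)) in He. exact He. }
  destruct i.
  - simpl sum_f_R0. lra.
  - simpl sum_f_R0. assert (0 <= sum_f_R0 a i) by (apply cond_pos_sum; auto).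
    specialize (Hp (S i)). lra.
Qed.

Lemma Series_nonneg (a : nat -> R) : ex_series a -> (forall n, 0 <= a n) -> 0 <= Series a.
Proof. intros. specialize (Series_ge_term a 0 H H0). specialize (H0 0%nat). lra. Qed.

Lemma tent_range x : 0 <= x <= 1 -> 0 <= tent x <= 1.
Proof. unfold tent; destruct Rle_dec; lra. Qed.

Lemma iter_range n x : 0 <= x <= 1 -> 0 <= tent_iter n x <= 1.
Proof. induction n; simpl; auto. intros H. apply tent_range. apply IHn, H. Qed.

Lemma iter_S n x : tent_iter (S n) x = tent (tent_iter n x).
Proof. reflexivity. Qed.

Lemma iter_S' n x : tent_iter (S n) x = tent_iter n (tent x).
Proof. unfold tent_iter. apply Nat.iter_succ_r. Qed.

Definition tk (y : R) (k : nat) := (/ 2) ^ (S k) * tent_iter (S k) y.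

Lemma tk_bound y k : 0 <= y <= 1 -> 0 <= tk y k <= (/2)^(S k).
Proof.
  intros H. unfold tk. assert (H1 := iter_range (S k) y H).
  assert (0 < (/2)^(S k)) by (apply pow_lt; lra). split; nra.
Qed.

Lemma tk_ex y : 0 <= y <= 1 -> ex_series (tk y).
Proof.
  intros H. apply (@ex_series_le R_AbsRing R_CompleteNormedModule _ (fun n => (/2)^(S n))); [|apply geom_ex].
  intros n. destruct (tk_bound y n H). change (Rabs (tk y n) <= (/2)^(S n)).
  rewrite Rabs_pos_eq; lra.
Qed.

Lemma takagi_range y : 0 <= y <= 1 -> 0 <= takagi y <= 1.
Proof.
  intros H. unfold takagi. fold (tk y). split.
  - apply Series_nonneg; [apply tk_ex; auto| intros; apply tk_bound; auto].
  - rewrite <- (is_series_unique _ _ geom_is). apply Series_le; [|apply geom_ex].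
    intros; apply tk_bound; auto.
Qed.

Lemma takagi_step y : 0 <= y <= 1 -> takagi y = / 2 * tent y + / 2 * takagi (tent y).
Proof.
  intros H. unfold takagi. fold (tk y). fold (tk (tent y)).
  rewrite Series_incr_1 by (apply tk_ex; auto).
  rewrite <- Series_scal_l. f_equal.
  - unfold tk. simpl. ring.
  - apply Series_ext. intros n. unfold tk. rewrite (iter_S' (S n)). simpl. ring.
Qed.

Fixpoint Psum (n : nat) (y : R) : R :=
  match n with 0 => 0 | S n => Psum n y + (/2)^(S n) * tent_iter (S n) y end.

Lemma takagi_split n y : 0 <= y <= 1 ->
  takagi y = Psum n y + (/2)^n * takagi (tent_iter n y).
Proof.
  intros H. induction n.
  - simpl. ring.
  - rewrite IHn. rewrite (takagi_step (tent_iter n y)) by (apply iter_range; auto).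
    simpl Psum. rewrite iter_S. simpl. ring.
Qed.

Lemma half_le m n : (m <= n)%nat -> (/2)^n <= (/2)^m.
Proof.
  intros H. induction H; [lra|]. simpl. assert (0 <= (/2)^m0) by (apply pow_le; lra). lra.
Qed.

Lemma pow_le_one x n : 0 <= x <= 1 -> x ^ n <= 1.
Proof.
  intros H. induction n; simpl; [lra|]. assert (0 <= x ^ n) by (apply pow_le; lra). nra.
Qed.

Definition ee (k : nat) (x : R) : R := if Rle_dec (tent_iter k x) (1/2) then 1 else -1.
Fixpoint sg (k : nat) (x : R) : R := match k with 0 => 1 | S k => sg k x * ee k x end.
Fixpoint Dsum (n : nat) (x : R) : R := match n with 0 => 0 | S n => Dsum n x + sg (S n) x end.

Lemma sg_pm k x : sg k x = 1 \/ sg k x = -1.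
Proof.
  induction k; simpl; auto. unfold ee; destruct Rle_dec; destruct IHk as [->| ->]; lra.
Qed.

Lemma pow_inv2 k : (/2)^k * 2^k = 1.
Proof. rewrite <- Rpow_mult_distr. replace (/2*2) with 1 by field. apply pow1. Qed.

Lemma propag x h d n :
  (forall k, (k < n)%nat -> d <= Rabs (tent_iter k x - 1/2)) ->
  (forall k, (k < n)%nat -> 2^k * Rabs h < d) ->
  forall m, (m <= n)%nat -> tent_iter m (x+h) = tent_iter m x + sg m x * 2^m * h.
Proof.
  intros Hd Hh m. induction m; intros Hm.
  - simpl. ring.
  - rewrite !iter_S. rewrite IHm by lia. simpl sg.
    assert (H1 := Hd m ltac:(lia)). assert (H2 := Hh m ltac:(lia)).
    set (a := tent_iter m x) in *.
    assert (Hp : 0 < 2^m) by (apply pow_lt; lra).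
    assert (Hu : - d < sg m x * 2^m * h < d).
    { destruct (sg_pm m x) as [->| ->]; revert H2; unfold Rabs; destruct Rcase_abs; intros; nra. }
    revert H1. unfold ee, tent. fold a. unfold Rabs; destruct Rcase_abs;
    destruct (Rle_dec a (1/2)); destruct (Rle_dec (a + sg m x * 2^m * h) (1/2)); intros; try lra; simpl; ring.
Qed.

Lemma ee_same x h d n :
  (forall k, (k < n)%nat -> d <= Rabs (tent_iter k x - 1/2)) ->
  (forall k, (k < n)%nat -> 2^k * Rabs h < d) ->
  forall k, (k < n)%nat -> ee k (x+h) = ee k x.
Proof.
  intros Hd Hh k Hk. unfold ee. rewrite (propag x h d n Hd Hh k) by lia.
  assert (H1 := Hd k Hk). assert (H2 := Hh k Hk).
  set (a := tent_iter k x) in *.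
  assert (Hp : 0 < 2^k) by (apply pow_lt; lra).
  assert (Hu : - d < sg k x * 2^k * h < d).
  { destruct (sg_pm k x) as [->| ->]; revert H2; unfold Rabs; destruct Rcase_abs; intros; nra. }
  revert H1; unfold Rabs; destruct Rcase_abs;
  destruct (Rle_dec a (1/2)); destruct (Rle_dec (a + sg k x * 2^k * h) (1/2)); intros; lra.
Qed.

Lemma quot_bound x d n h :
  0 <= x <= 1 -> 0 <= x + h <= 1 -> h <> 0 -> 0 < d ->
  (forall k, (k < n)%nat -> d <= Rabs (tent_iter k x - 1/2)) ->
  (forall k, (k < n)%nat -> 2^k * Rabs h < d) ->
  d <= 2^n * Rabs h ->
  Rabs ((takagi (x + h) - takagi x) / h - Dsum n x) <= / d.
Proof.
  intros Hx Hy Hh Hd H1 H2 H3.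
  assert (HP : forall m, (m <= n)%nat -> Psum m (x+h) - Psum m x = h * Dsum m x).
  { induction m; intros Hm; cbn [Psum Dsum]; [ring|].
    rewrite (propag x h d n H1 H2 (S m) Hm).
    replace (Psum m (x + h) + (/ 2) ^ S m * (tent_iter (S m) x + sg (S m) x * 2 ^ S m * h) -
      (Psum m x + (/ 2) ^ S m * tent_iter (S m) x)) with
      ((Psum m (x + h) - Psum m x) + ((/2)^S m * 2^ S m) * sg (S m) x * h) by (simpl; ring).
    rewrite pow_inv2, IHm by lia. simpl. ring. }
  rewrite (takagi_split n (x+h)) by auto. rewrite (takagi_split n x) by auto.
  assert (E := HP n (Nat.le_refl n)).
  assert (T1 := takagi_range (tent_iter n (x+h)) (iter_range n _ Hy)).
  assert (T2 := takagi_range (tent_iter n x) (iter_range n _ Hx)).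
  replace ((Psum n (x + h) + (/ 2) ^ n * takagi (tent_iter n (x + h)) -
     (Psum n x + (/ 2) ^ n * takagi (tent_iter n x))) / h - Dsum n x) with
     ((/2)^n * (takagi (tent_iter n (x + h)) - takagi (tent_iter n x)) / h).
  2:{ replace (Psum n (x + h) + (/ 2) ^ n * takagi (tent_iter n (x + h)) -
     (Psum n x + (/ 2) ^ n * takagi (tent_iter n x))) with
     ((Psum n (x + h) - Psum n x) + (/ 2) ^ n * (takagi (tent_iter n (x + h)) - takagi (tent_iter n x))) by ring.
     rewrite E. field. auto. }
  set (D := takagi (tent_iter n (x + h)) - takagi (tent_iter n x)).
  assert (HD : Rabs D <= 1) by (unfold D; apply Rabs_le; lra).
  unfold Rdiv. rewrite !Rabs_mult. rewrite Rabs_inv.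
  assert (Hp : 0 < 2^n) by (apply pow_lt; lra).
  assert (Hh' : 0 < Rabs h) by (apply Rabs_pos_lt; auto).
  rewrite Rabs_pos_eq by (apply pow_le; lra).
  rewrite <- Rinv_pow by lra.
  assert (0 < / Rabs h) by (apply Rinv_0_lt_compat; lra).
  assert (0 <= Rabs D) by apply Rabs_pos.
  assert (Rabs D * / Rabs h <= / Rabs h) by nra.
  apply Rle_trans with (/ 2 ^ n * / Rabs h).
  { rewrite Rmult_assoc. apply Rmult_le_compat_l; [left; apply Rinv_0_lt_compat; lra| lra]. }
  rewrite <- Rinv_mult. apply Rinv_le_contravar; lra.
Qed.

Lemma find_n a d : 0 < a -> 0 < d ->
  exists n, (forall k, (k < n)%nat -> 2^k * a < d) /\ d <= 2^n * a.
Proof.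
  intros Ha Hd.
  assert (HK : exists K, d <= 2^K * a).
  { destruct (pow_lt_1_zero (/2) ltac:(rewrite Rabs_pos_eq; lra) (a / d) ltac:(apply Rdiv_lt_0_compat; lra)) as [K HK].
    exists K. specialize (HK K (Nat.le_refl K)). rewrite Rabs_pos_eq in HK by (apply pow_le; lra).
    rewrite <- Rinv_pow in HK by lra. assert (0 < 2^K) by (apply pow_lt; lra).
    apply Rmult_lt_compat_r with (r := 2^K * d) in HK; [|nra].
    replace (/ 2 ^ K * (2 ^ K * d)) with d in HK by (field; lra).
    replace (a / d * (2 ^ K * d)) with (2^K * a) in HK by (field; lra). lra. }
  destruct HK as [K HK]. revert HK. induction K; intros HK.
  - exists 0%nat. split; [intros; lia| auto].
  - destruct (Rle_dec d (2^K * a)) as [H|H].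
    + apply IHK; auto.
    + exists (S K). split; auto. intros k Hk.
      assert (2^k <= 2^K) by (apply Rle_pow; [lra| lia]). nra.
Qed.

Lemma near_n d N0 h : 0 < d -> h <> 0 -> Rabs h < d * (/2)^N0 ->
  exists n, (forall k, (k < n)%nat -> 2^k * Rabs h < d) /\ d <= 2^n * Rabs h /\ (n >= N0)%nat.
Proof.
  intros Hd Hh Habs.
  destruct (find_n (Rabs h) d (Rabs_pos_lt h Hh) Hd) as [n [H1 H2]].
  exists n. repeat split; auto.
  destruct (Compare_dec.le_lt_dec N0 n) as [|Hl]; [lia|exfalso].
  assert (2^n <= 2^N0) by (apply Rle_pow; [lra|lia]).
  assert (0 < 2^N0) by (apply pow_lt; lra).
  assert (Rabs h * 2^N0 < d) .
  { apply Rmult_lt_compat_r with (r := 2^N0) in Habs; auto.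
    rewrite Rmult_assoc, pow_inv2 in Habs. lra. }
  assert (0 <= Rabs h) by apply Rabs_pos. nra.
Qed.

Lemma deriv_plus x d : 0 <= x <= 1 -> 0 < d ->
  (forall k, d <= Rabs (tent_iter k x - 1/2)) ->
  (forall M, exists N0, forall n, (n >= N0)%nat -> M < Dsum n x) ->
  deriv_pinfty takagi x.
Proof.
  intros Hx Hd Hk HD M. destruct (HD (M + /d)) as [N0 HN0].
  exists (d * (/2)^N0). split. { apply Rmult_lt_0_compat; [lra| apply pow_lt; lra]. }
  intros h Hh Habs Hy.
  destruct (near_n d N0 h Hd Hh Habs) as [n [H1 [H2 H3]]]. apply HN0 in H3.
  assert (Q := quot_bound x d n h Hx Hy Hh Hd (fun k _ => Hk k) H1 H2).
  apply Rabs_le_between in Q. lra.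
Qed.

Lemma deriv_minus x d : 0 <= x <= 1 -> 0 < d ->
  (forall k, d <= Rabs (tent_iter k x - 1/2)) ->
  (forall M, exists N0, forall n, (n >= N0)%nat -> Dsum n x < M) ->
  deriv_minfty takagi x.
Proof.
  intros Hx Hd Hk HD M. destruct (HD (M - /d)) as [N0 HN0].
  exists (d * (/2)^N0). split. { apply Rmult_lt_0_compat; [lra| apply pow_lt; lra]. }
  intros h Hh Habs Hy.
  destruct (near_n d N0 h Hd Hh Habs) as [n [H1 [H2 H3]]]. apply HN0 in H3.
  assert (Q := quot_bound x d n h Hx Hy Hh Hd (fun k _ => Hk k) H1 H2).
  apply Rabs_le_between in Q. lra.
Qed.

Definition cb (b : nat -> bool) (m : nat) : R := if b m then (/2)^(S m) else 0.
Definition pi (b : nat -> bool) : R := Series (cb b).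
Definition shift (b : nat -> bool) : nat -> bool := fun m => b (S m).
Definition compl (b : nat -> bool) : nat -> bool := fun m => negb (b m).

Lemma cb_bound b m : 0 <= cb b m <= (/2)^(S m).
Proof. unfold cb. assert (0 < (/2)^(S m)) by (apply pow_lt; lra). destruct (b m); lra. Qed.

Lemma pi_ex b : ex_series (cb b).
Proof.
  apply (@ex_series_le R_AbsRing R_CompleteNormedModule _ (fun n => (/2)^(S n))); [|apply geom_ex].
  intros n. destruct (cb_bound b n). change (Rabs (cb b n) <= (/2)^(S n)).
  rewrite Rabs_pos_eq; lra.
Qed.

Lemma pi_range b : 0 <= pi b <= 1.
Proof.
  unfold pi. split.
  - apply Series_nonneg; [apply pi_ex| intros; apply cb_bound].
  - rewrite <- (is_series_unique _ _ geom_is). apply Series_le; [|apply geom_ex].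
    intros; apply cb_bound.
Qed.

Lemma pi_ext b b' : (forall m, b m = b' m) -> pi b = pi b'.
Proof. intros H. unfold pi. apply Series_ext. intros; unfold cb; rewrite H; auto. Qed.

Lemma pi_step b : pi b = (if b 0%nat then /2 else 0) + /2 * pi (shift b).
Proof.
  unfold pi. rewrite Series_incr_1 by apply pi_ex. rewrite <- Series_scal_l. f_equal.
  - unfold cb. destruct (b 0%nat); simpl; ring.
  - apply Series_ext. intros n. unfold cb, shift. destruct (b (S n)); simpl; ring.
Qed.

Lemma pi_compl b : pi (compl b) = 1 - pi b.
Proof.
  assert (pi (compl b) + pi b = 1); [|lra].
  unfold pi. rewrite <- (Series_plus (cb (compl b)) (cb b)) by apply pi_ex.
  rewrite <- (is_series_unique _ _ geom_is). apply Series_ext.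
  intros n; unfold cb, compl. destruct (b n); simpl; ring.
Qed.

Lemma pi_ge b i : b i = true -> (/2)^(S i) <= pi b.
Proof.
  intros H. unfold pi. replace ((/2)^(S i)) with (cb b i) by (unfold cb; rewrite H; auto).
  apply Series_ge_term; [apply pi_ex| intros; apply cb_bound].
Qed.

Lemma tent_pi b : tent (pi b) = pi (if b 0%nat then compl (shift b) else shift b).
Proof.
  rewrite (pi_step b). assert (H := pi_range (shift b)).
  destruct (b 0%nat) eqn:E.
  - rewrite pi_compl. unfold tent. destruct Rle_dec; lra.
  - unfold tent. destruct Rle_dec; lra.
Qed.

Definition prv (k : nat) (b : nat -> bool) : bool := match k with 0 => false | S k => b k end.
Definition tb (k : nat) (b : nat -> bool) : nat -> bool := fun m => xorb (b (k + m)%nat) (prv k b).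

Lemma iter_pi k b : tent_iter k (pi b) = pi (tb k b).
Proof.
  induction k.
  - simpl. apply pi_ext. intros m. unfold tb. simpl. destruct (b m); auto.
  - rewrite iter_S, IHk, tent_pi. apply pi_ext. intros m. unfold tb, compl, shift. simpl prv.
    rewrite Nat.add_0_r.
    destruct (b k), (prv k b); simpl;
    (replace (k + S m)%nat with (S (k + m))%nat by lia); destruct (b (S (k + m))); reflexivity.
Qed.

Definition Win (L : nat) (b : nat -> bool) : Prop :=
  forall k, exists i, (i < L)%nat /\ b (S k + i)%nat = b k.

Lemma dist_half L b : Win L b -> forall k, (/2)^(S L) <= Rabs (tent_iter k (pi b) - 1/2).
Proof.
  intros HW k. rewrite iter_pi. rewrite (pi_step (tb k b)).
  destruct (HW k) as [i [Hi Hb]].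
  assert (Hp : (/2)^(S L) <= /2 * (/2)^(S i)).
  { change (/2 * (/2)^(S i)) with ((/2)^(S (S i))). apply half_le; lia. }
  assert (R1 := pi_range (shift (tb k b))).
  unfold tb at 1. rewrite Nat.add_0_r.
  destruct (xorb (b k) (prv k b)) eqn:E.
  - assert (Hg : (/2)^(S i) <= pi (shift (tb k b))).
    { apply pi_ge. unfold shift, tb. replace (k + S i)%nat with (S k + i)%nat by lia. rewrite Hb.
      destruct (b k), (prv k b); simpl in *; congruence. }
    rewrite Rabs_pos_eq; lra.
  - assert (Hg : (/2)^(S i) <= pi (compl (shift (tb k b)))).
    { apply pi_ge. unfold compl, shift, tb. replace (k + S i)%nat with (S k + i)%nat by lia. rewrite Hb.
      destruct (b k), (prv k b); simpl in *; congruence. }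
    rewrite pi_compl in Hg. rewrite Rabs_left1; lra.
Qed.

Lemma tb0 k b : tb k b 0%nat = xorb (b k) (prv k b).
Proof. unfold tb. rewrite Nat.add_0_r. auto. Qed.

Lemma ee_pi b k : 0 < Rabs (tent_iter k (pi b) - 1/2) ->
  ee k (pi b) = if Bool.eqb (b k) (prv k b) then 1 else -1.
Proof.
  intros H. unfold ee. revert H. rewrite iter_pi. rewrite (pi_step (tb k b)).
  assert (R1 := pi_range (shift (tb k b))). rewrite tb0.
  destruct (b k), (prv k b); simpl; destruct Rle_dec; intros; auto;
  try (rewrite Rabs_pos_eq in H; lra); try lra.
  all: rewrite Rabs_left1 in H; lra.
Qed.

Fixpoint Db (n : nat) (b : nat -> bool) : R :=
  match n with 0 => 0 | S n => Db n b + (if b n then -1 else 1) end.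

Lemma sg_pi b : (forall k, 0 < Rabs (tent_iter k (pi b) - 1/2)) ->
  forall k, sg (S k) (pi b) = if b k then -1 else 1.
Proof.
  intros H k. induction k.
  - simpl. rewrite ee_pi by auto. simpl. destruct (b 0%nat); simpl; ring.
  - change (sg (S (S k)) (pi b)) with (sg (S k) (pi b) * ee (S k) (pi b)).
    rewrite IHk, ee_pi by auto. simpl prv. destruct (b k), (b (S k)); simpl; ring.
Qed.

Lemma Dsum_pi b : (forall k, 0 < Rabs (tent_iter k (pi b) - 1/2)) ->
  forall n, Dsum n (pi b) = Db n b.
Proof.
  intros H n. induction n; cbn [Dsum Db]; auto. rewrite IHn. rewrite sg_pi by auto. ring.
Qed.

Lemma separation L b b' n : Win L b -> Win L b' ->
  Rabs (pi b' - pi b) < (/2)^(S L) * (/2)^n -> forall k, (k < n)%nat -> b' k = b k.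
Proof.
  intros W W' Hd.
  set (d := (/2)^(S L)).
  assert (Hdp : 0 < d) by (apply pow_lt; lra).
  assert (HE : forall k, (k < n)%nat -> ee k (pi b') = ee k (pi b)).
  { replace (pi b') with (pi b + (pi b' - pi b)) by ring.
    apply (ee_same (pi b) (pi b' - pi b) d n).
    - intros; apply dist_half; auto.
    - intros k Hk. assert (2^k * (/2)^n <= 1).
      { replace 1 with (2^k * (/2)^k) by (rewrite Rmult_comm; apply pow_inv2).
        apply Rmult_le_compat_l; [apply pow_le; lra|]. apply half_le; lia. }
      assert (0 < 2^k) by (apply pow_lt; lra). assert (0 <= Rabs (pi b' - pi b)) by apply Rabs_pos.
      assert (0 < (/2)^n) by (apply pow_lt; lra).
      assert (2^k * Rabs (pi b' - pi b) < 2^k * (d * (/2)^n)) by (apply Rmult_lt_compat_l; auto).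
      assert (d * (2^k * (/2)^n) <= d * 1) by (apply Rmult_le_compat_l; lra). nra. }
  assert (P : forall k, 0 < Rabs (tent_iter k (pi b) - 1/2)).
  { intros k; eapply Rlt_le_trans; [|apply (dist_half L b W)]. apply pow_lt; lra. }
  assert (P' : forall k, 0 < Rabs (tent_iter k (pi b') - 1/2)).
  { intros k; eapply Rlt_le_trans; [|apply (dist_half L b' W')]. apply pow_lt; lra. }
  intros k. induction k as [k IH] using (well_founded_induction Wf_nat.lt_wf). intros Hk.
  assert (Hprv : prv k b' = prv k b).
  { destruct k; simpl; auto. apply IH; lia. }
  specialize (HE k Hk). rewrite !ee_pi in HE by auto. rewrite Hprv in HE.
  destruct (b' k), (b k), (prv k b); simpl in HE; auto; lra.
Qed.


Fixpoint all_words (n : nat) : list (list bool) :=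
  match n with
  | O => nil :: nil
  | S n => map (cons false) (all_words n) ++ map (cons true) (all_words n)
  end.

Fixpoint nz (l : list bool) : nat := match l with nil => 0 | x :: l => ((if x then 0 else 1) + nz l)%nat end.
Fixpoint no (l : list bool) : nat := match l with nil => 0 | x :: l => ((if x then 1 else 0) + no l)%nat end.
Definition posw (l : list bool) : bool := Nat.ltb (no l) (nz l).

Lemma nz_no l : (nz l + no l)%nat = length l.
Proof. induction l; simpl; auto. destruct a; lia. Qed.
Lemma nz_neg l : nz (map negb l) = no l.
Proof. induction l; simpl; auto. destruct a; simpl; lia. Qed.
Lemma no_neg l : no (map negb l) = nz l.
Proof. induction l; simpl; auto. destruct a; simpl; lia. Qed.

Lemma all_words_len n w : In w (all_words n) -> length w = n.
Proof.
  revert w; induction n; simpl; intros w H.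
  - destruct H as [<-|[]]; auto.
  - apply in_app_or in H. destruct H as [H|H]; apply in_map_iff in H; destruct H as [x [<- Hx]]; simpl; f_equal; auto.
Qed.

Lemma all_words_length n : length (all_words n) = (2 ^ n)%nat.
Proof. induction n; simpl; auto. rewrite length_app, !length_map. lia. Qed.

Lemma nodup_map_inj {A B} (f : A -> B) l : (forall x y, f x = f y -> x = y) -> NoDup l -> NoDup (map f l).
Proof.
  intros Hi Hn. apply NoDup_map_NoDup_ForallPairs; auto. intros x y _ _; apply Hi.
Qed.

Lemma all_words_nodup n : NoDup (all_words n).
Proof.
  induction n; simpl. { constructor; [simpl; tauto| constructor]. }
  apply NoDup_app.
  - apply nodup_map_inj; auto. intros x y H; inversion H; auto.
  - apply nodup_map_inj; auto. intros x y H; inversion H; auto.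
  - intros x H1 H2. apply in_map_iff in H1, H2. destruct H1 as [? [<- _]]. destruct H2 as [? [H _]]. discriminate.
Qed.

Lemma len_filter_map {A B} (Q : B -> bool) (f : A -> B) l :
  length (filter Q (map f l)) = length (filter (fun x => Q (f x)) l).
Proof. induction l; simpl; auto. destruct (Q (f a)); simpl; auto. Qed.

Lemma len_filter_split {A} (Q : A -> bool) l :
  (length (filter Q l) + length (filter (fun x => negb (Q x)) l))%nat = length l.
Proof. induction l; simpl; auto. destruct (Q a); simpl; lia. Qed.

Lemma cnt_compl n : forall Q : list bool -> bool,
  length (filter (fun l => Q (map negb l)) (all_words n)) = length (filter Q (all_words n)).
Proof.
  induction n; intros Q; simpl; auto.
  rewrite !filter_app, !length_app, !len_filter_map. simpl.
  rewrite (IHn (fun x => Q (true :: x))), (IHn (fun x => Q (false :: x))). lia.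
Qed.

Lemma count_pos K : length (filter posw (all_words (2*K+3))) = (2 ^ (2*K+2))%nat.
Proof.
  assert (E : length (filter (fun l => posw (map negb l)) (all_words (2*K+3))) =
              length (filter (fun l => negb (posw l)) (all_words (2*K+3)))).
  { f_equal. apply filter_ext_in. intros l Hl. apply all_words_len in Hl.
    unfold posw. rewrite nz_neg, no_neg. assert (H := nz_no l).
    destruct (Nat.ltb (no l) (nz l)) eqn:E1; destruct (Nat.ltb (nz l) (no l)) eqn:E2; simpl; auto.
    - apply Nat.ltb_lt in E1, E2. lia.
    - apply Nat.ltb_ge in E1, E2. lia. }
  rewrite cnt_compl in E. assert (H := len_filter_split posw (all_words (2*K+3))).
  rewrite all_words_length in H. rewrite <- E in H.
  replace (2 ^ (2*K+3))%nat with (2 * 2 ^ (2*K+2))%nat in H by (replace (2*K+3)%nat with (S (2*K+2)) by lia; reflexivity).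
  lia.
Qed.

Definition NN (K : nat) : nat := (2*K+5)%nat.
Definition mkw (m : list bool) : list bool := false :: (m ++ true :: nil).
Definition Wb (K : nat) (be : bool) : list (list bool) :=
  map (map (xorb be)) (map mkw (filter posw (all_words (2*K+3)))).

Fixpoint lsum (l : list bool) : R := match l with nil => 0 | x :: l => (if x then -1 else 1) + lsum l end.
Definition sgn (be : bool) : R := if be then -1 else 1.

Lemma lsum_app l l' : lsum (l ++ l') = lsum l + lsum l'.
Proof. induction l; simpl; [ring| rewrite IHl; ring]. Qed.
Lemma lsum_xor be l : lsum (map (xorb be) l) = sgn be * lsum l.
Proof. induction l; simpl; [unfold sgn; destruct be; simpl; ring|]. rewrite IHl. unfold sgn; destruct be, a; simpl; ring. Qed.
Lemma lsum_cnt l : lsum l = INR (nz l) - INR (no l).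
Proof. induction l; cbn [lsum nz no]; [simpl; ring|]. rewrite IHl. destruct a; cbn -[INR]; rewrite ?S_INR, ?Nat.add_0_l; ring. Qed.
Lemma lsum_abs l : Rabs (lsum l) <= INR (length l).
Proof.
  induction l; cbn [lsum length]; [simpl; rewrite Rabs_R0; lra|]. rewrite S_INR.
  eapply Rle_trans; [apply Rabs_triang|]. destruct a; [replace (Rabs (-1)) with 1 by (rewrite Rabs_left; lra)|rewrite Rabs_R1]; lra.
Qed.

Lemma Wb_length K be : length (Wb K be) = (2 ^ (2*K+2))%nat.
Proof. unfold Wb. rewrite !length_map. apply count_pos. Qed.

Lemma Wb_nodup K be : NoDup (Wb K be).
Proof.
  unfold Wb. apply nodup_map_inj.
  { intros x y H. assert (map (xorb be) (map (xorb be) x) = map (xorb be) (map (xorb be) y)) by congruence.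
    assert (XX : forall l, map (xorb be) (map (xorb be) l) = l).
    { induction l; simpl; auto. rewrite IHl. destruct be, a; auto. }
    rewrite !XX in H0. auto. }
  apply nodup_map_inj.
  { intros x y H. unfold mkw in H. inversion H. apply app_inv_tail in H1. auto. }
  apply NoDup_filter. apply all_words_nodup.
Qed.

Lemma Wb_word K be w : In w (Wb K be) ->
  length w = NN K /\ nth 0 w false = be /\ nth (NN K - 1) w false = negb be /\ 1 <= sgn be * lsum w.
Proof.
  unfold Wb. intros H. apply in_map_iff in H. destruct H as [w' [<- H]].
  apply in_map_iff in H. destruct H as [m [<- H]]. apply filter_In in H. destruct H as [Hm Hp].
  apply all_words_len in Hm. unfold posw in Hp. apply Nat.ltb_lt in Hp.
  unfold mkw. repeat split.
  - rewrite length_map. simpl. rewrite length_app. simpl. unfold NN. lia.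
  - simpl. destruct be; auto.
  - rewrite (nth_indep _ false (xorb be false)) by (rewrite length_map; simpl; rewrite length_app; simpl; unfold NN; lia).
    rewrite map_nth. replace (NN K - 1)%nat with (S (length m)) by (unfold NN; lia).
    simpl. rewrite nth_middle. destruct be; auto.
  - rewrite lsum_xor. replace (sgn be * (sgn be * lsum (false :: m ++ true :: nil))) with
      (lsum (false :: m ++ true :: nil)) by (unfold sgn; destruct be; ring).
    simpl. rewrite lsum_app. simpl. rewrite lsum_cnt.
    assert (INR (no m) + 1 <= INR (nz m)) by (rewrite <- S_INR; apply le_INR; lia). lra.
Qed.

Definition Good (K : nat) (be : bool) (b : nat -> bool) : Prop :=
  forall j, In (map b (seq (j * NN K) (NN K))) (Wb K be).

Lemma nth_map_seq (b : nat -> bool) s n r : (r < n)%nat -> nth r (map b (seq s n)) false = b (s + r)%nat.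
Proof.
  revert s r; induction n; intros s r H; [lia|]. simpl. destruct r; [rewrite Nat.add_0_r; auto|].
  rewrite IHn by lia. f_equal. lia.
Qed.

Lemma Good_Win K be b : Good K be b -> Win (2 * NN K) b.
Proof.
  intros HG k. set (N := NN K). assert (HN : (N > 0)%nat) by (unfold N, NN; lia).
  set (s := (S (k / N) * N)%nat).
  assert (Hk := Nat.div_mod k N ltac:(lia)). assert (Hr := Nat.mod_upper_bound k N ltac:(lia)).
  assert (Hs1 : (k < s)%nat) by (unfold s; simpl; lia).
  assert (Hs2 : (s <= k + N)%nat) by (unfold s; simpl; lia).
  destruct (Wb_word K be _ (HG (S (k / N)))) as [Hl [H0 [H1 _]]]. fold N in H0, H1, Hl.
  rewrite nth_map_seq in H0, H1 by lia. fold s in H0, H1.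
  destruct (Bool.bool_dec (b k) be) as [E|E].
  - exists (s - S k)%nat. split; [lia|]. replace (S k + (s - S k))%nat with (s + 0)%nat by lia. congruence.
  - exists (s + (N - 1) - S k)%nat. split; [lia|]. replace (S k + (s + (N - 1) - S k))%nat with (s + (N - 1))%nat by lia.
    rewrite H1. destruct (b k), be; simpl in *; congruence.
Qed.

Lemma Db_lsum n b : Db n b = lsum (map b (seq 0 n)).
Proof.
  induction n; cbn [Db]; auto. rewrite seq_S, map_app, lsum_app, IHn. simpl. ring.
Qed.

Lemma Good_D K be b : Good K be b ->
  forall n, INR (n / NN K) - INR (NN K) <= sgn be * Db n b.
Proof.
  intros HG. set (N := NN K). assert (HN : (N > 0)%nat) by (unfold N, NN; lia).
  assert (HJ : forall j, INR j <= sgn be * Db (j * N) b).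
  { induction j; [simpl; lra|].
    rewrite !Db_lsum in *. replace (S j * N)%nat with (j * N + N)%nat by lia.
    rewrite seq_app, map_app, lsum_app. simpl (0 + j * N)%nat.
    destruct (Wb_word K be _ (HG j)) as [_ [_ [_ H]]]. rewrite S_INR. fold N in H. lra. }
  intros n. assert (Hk := Nat.div_mod n N ltac:(lia)). assert (Hr := Nat.mod_upper_bound n N ltac:(lia)).
  rewrite Hk at 2. rewrite Db_lsum, Nat.mul_comm, seq_app, map_app, lsum_app. simpl (0 + _)%nat.
  specialize (HJ (n / N)%nat). rewrite Db_lsum in HJ.
  assert (A := lsum_abs (map b (seq (n / N * N) (n mod N)))). rewrite length_map, length_seq in A.
  assert (INR (n mod N) <= INR N) by (apply le_INR; lia).
  apply Rabs_le_between in A. unfold sgn in *. destruct be; lra.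
Qed.

Definition bseq (K : nat) (ws : nat -> list bool) : nat -> bool :=
  fun m => nth (m mod NN K) (ws (m / NN K)%nat) false.

Lemma bseq_block K be ws : (forall j, In (ws j) (Wb K be)) ->
  forall j, map (bseq K ws) (seq (j * NN K) (NN K)) = ws j.
Proof.
  intros Hw j. set (N := NN K). assert (HN : (N > 0)%nat) by (unfold N, NN; lia).
  destruct (Wb_word K be _ (Hw j)) as [Hl _]. fold N in Hl.
  apply nth_ext with (d := false) (d' := false).
  - rewrite length_map, length_seq. auto.
  - intros r Hr. rewrite length_map, length_seq in Hr. rewrite nth_map_seq by auto.
    unfold bseq. fold N.
    assert (E1 : ((j * N + r) / N)%nat = j).
    { rewrite Nat.div_add_l by lia. rewrite Nat.div_small by lia. lia. }
    assert (E2 : ((j * N + r) mod N)%nat = r).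
    { rewrite Nat.add_comm, Nat.mod_add by lia. apply Nat.mod_small; lia. }
    rewrite E1, E2. auto.
Qed.

Lemma bseq_Good K be ws : (forall j, In (ws j) (Wb K be)) -> Good K be (bseq K ws).
Proof. intros Hw j. rewrite (bseq_block K be ws Hw). auto. Qed.

Definition agreeb (n : nat) (p q : nat -> bool) : bool :=
  forallb (fun m => Bool.eqb (p m) (q m)) (seq 0 n).

Lemma agreeb_spec n p q : agreeb n p q = true <-> (forall m, (m < n)%nat -> p m = q m).
Proof.
  unfold agreeb. rewrite forallb_forall. split.
  - intros H m Hm. apply eqb_prop. apply H. apply in_seq. lia.
  - intros H m Hm. apply in_seq in Hm. rewrite H by lia. apply eqb_reflx.
Qed.

Fixpoint lsumR (f : list bool -> R) (l : list (list bool)) : R :=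
  match l with nil => 0 | w :: l => f w + lsumR f l end.

Lemma zero_is : is_series (fun _ : nat => 0) 0.
Proof.
  assert (E : ex_series (fun _ : nat => 0)).
  { apply (@ex_series_le R_AbsRing R_CompleteNormedModule _ (fun n => (/2)^(S n))); [|apply geom_ex].
    intros n. change (Rabs 0 <= (/2)^(S n)). rewrite Rabs_R0. apply pow_le; lra. }
  assert (Series (fun _ : nat => 0) = 0).
  { transitivity (0 * Series (fun _ : nat => 0)); [|ring]. rewrite <- Series_scal_l. apply Series_ext; intros; ring. }
  pattern 0 at 2. rewrite <- H. apply Series_correct. auto.
Qed.

Lemma lsumR_series (g : list bool -> nat -> R) l : (forall w, ex_series (g w)) ->
  is_series (fun i => lsumR (fun w => g w i) l) (lsumR (fun w => Series (g w)) l).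
Proof.
  intros Hg. induction l; simpl.
  - apply zero_is.
  - apply (is_series_plus (fun i => g a i) (fun i => lsumR (fun w => g w i) l)); auto.
    apply Series_correct; auto.
Qed.

Lemma lsumR_le f g l : (forall w, In w l -> f w <= g w) -> lsumR f l <= lsumR g l.
Proof. induction l; simpl; intros H; [lra|]. assert (f a <= g a) by auto. assert (lsumR f l <= lsumR g l) by auto. lra. Qed.

Lemma lsumR_const c l : lsumR (fun _ => c) l = INR (length l) * c.
Proof. induction l; cbn [lsumR length]; [simpl; ring|]. rewrite IHl, S_INR. ring. Qed.

Lemma lsumR_ind t c l : 0 <= c -> NoDup l ->
  lsumR (fun w => if list_eq_dec bool_dec w t then c else 0) l <= c.
Proof.
  intros Hc Hn. induction Hn; simpl; [lra|].
  destruct (list_eq_dec bool_dec x t) as [->|].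
  - assert (lsumR (fun w => if list_eq_dec bool_dec w t then c else 0) l <= lsumR (fun _ => 0) l).
    { apply lsumR_le. intros w Hw. destruct list_eq_dec; [subst; tauto| lra]. }
    rewrite lsumR_const in H0. lra.
  - lra.
Qed.


Definition ext (N j : nat) (p : nat -> bool) (w : list bool) : nat -> bool :=
  fun m => if Nat.ltb m (j * N) then p m else nth (m - j * N) w false.

Lemma ext_lt N j p w m : (m < j * N)%nat -> ext N j p w m = p m.
Proof. intros H. unfold ext. apply Nat.ltb_lt in H. rewrite H. auto. Qed.

Lemma ext_ge N j p w r : ext N j p w (j * N + r) = nth r w false.
Proof.
  unfold ext. destruct (Nat.ltb_spec (j * N + r) (j * N)); [lia|]. f_equal. lia.
Qed.

Lemma Wb_pos K be : (1 <= length (Wb K be))%nat.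
Proof. rewrite Wb_length. apply Nat.le_succ_l. apply Nat.neq_0_lt_0. apply Nat.pow_nonzero. lia. Qed.

Lemma cover_mass K be (J : nat -> nat) (Q : nat -> nat -> bool) Ssum :
  is_series (fun i => (/ INR (length (Wb K be)))^(J i)) Ssum ->
  (forall b, Good K be b -> exists i, forall m, (m < J i * NN K)%nat -> b m = Q i m) ->
  1 <= Ssum.
Proof.
  intros HS Hcov.
  set (N := NN K). set (W := Wb K be). set (M := length W).
  assert (HM : 1 <= INR M) by (rewrite <- INR_1; apply le_INR; apply Wb_pos).
  set (mu := / INR M).
  assert (Hmu : 0 < mu <= 1).
  { unfold mu. split; [apply Rinv_0_lt_compat; lra|]. rewrite <- Rinv_1. apply Rinv_le_contravar; lra. }
  assert (HMmu : INR M * mu = 1) by (unfold mu; field; lra).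
  fold N W M mu in HS, Hcov.
  set (wt := fun j p i => if agreeb (Nat.min j (J i) * N) p (Q i) then mu ^ (Nat.max j (J i)) else 0).
  assert (Hwt : forall j p i, 0 <= wt j p i <= mu ^ (J i)).
  { intros j p i. unfold wt. assert (0 < mu ^ (J i)) by (apply pow_lt; lra).
    destruct agreeb; [|lra]. split; [apply pow_le; lra|].
    replace (Nat.max j (J i)) with (J i + (Nat.max j (J i) - J i))%nat by lia.
    rewrite pow_add. assert (0 <= mu ^ (Nat.max j (J i) - J i) <= 1).
    { split; [apply pow_le; lra| apply pow_le_one; lra]. } nra. }
  assert (HexS : ex_series (fun i => mu ^ (J i))) by (eexists; eauto).
  assert (Hex : forall j p, ex_series (wt j p)).
  { intros j p. apply (@ex_series_le R_AbsRing R_CompleteNormedModule _ (fun i => mu ^ (J i))); auto.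
    intros n. change (Rabs (wt j p n) <= mu ^ (J n)). destruct (Hwt j p n). rewrite Rabs_pos_eq; lra. }
  set (F := fun j p => Series (wt j p)).
  assert (Hchild : forall j p i, lsumR (fun w => wt (S j) (ext N j p w) i) W <= wt j p i).
  { intros j p i. unfold wt at 2. destruct (agreeb (Nat.min j (J i) * N) p (Q i)) eqn:Ea.
    - rewrite agreeb_spec in Ea. destruct (Compare_dec.le_lt_dec (J i) j) as [Hle|Hlt].
      + assert (E : forall w, wt (S j) (ext N j p w) i = mu ^ (S j)).
        { intros w. unfold wt. replace (Nat.min (S j) (J i)) with (J i) by lia.
          replace (Nat.max (S j) (J i)) with (S j) by lia.
          replace (agreeb (J i * N) (ext N j p w) (Q i)) with true; auto.
          symmetry. apply agreeb_spec. intros m Hm. rewrite ext_lt by nia. apply Ea. nia. }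
        replace (lsumR (fun w => wt (S j) (ext N j p w) i) W) with (lsumR (fun _ => mu ^ S j) W)
          by (clear - E; generalize W; intros l; induction l; cbn [lsumR]; auto; rewrite E, IHl; auto).
        rewrite lsumR_const. replace (Nat.max j (J i)) with j by lia. fold M. simpl.
        rewrite <- Rmult_assoc, HMmu. lra.
      + set (t := map (Q i) (seq (j * N) N)).
        apply Rle_trans with (lsumR (fun w => if list_eq_dec bool_dec w t then mu ^ (J i) else 0) W).
        * apply lsumR_le. intros w Hw. unfold wt.
          replace (Nat.min (S j) (J i)) with (S j) by lia. replace (Nat.max (S j) (J i)) with (J i) by lia.
          destruct (agreeb (S j * N) (ext N j p w) (Q i)) eqn:Eb; [|destruct list_eq_dec; [apply pow_le|]; lra].
          rewrite agreeb_spec in Eb. destruct list_eq_dec as [|Hne]; [lra|]. exfalso; apply Hne.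
          destruct (Wb_word K be w Hw) as [Hl _]. fold N in Hl.
          apply nth_ext with (d := false) (d' := false).
          { unfold t. rewrite length_map, length_seq. auto. }
          intros r Hr. unfold t. rewrite nth_map_seq by lia. rewrite <- (ext_ge N j p w r).
          apply Eb. simpl. lia.
        * replace (Nat.max j (J i)) with (J i) by lia. apply lsumR_ind; [apply pow_le; lra| apply Wb_nodup].
    - apply Rle_trans with (lsumR (fun _ => 0) W).
      + apply lsumR_le. intros w _. unfold wt.
        destruct (agreeb (Nat.min (S j) (J i) * N) (ext N j p w) (Q i)) eqn:Eb; [|lra].
        exfalso. rewrite agreeb_spec in Eb. assert (agreeb (Nat.min j (J i) * N) p (Q i) = true); [|congruence].
        apply agreeb_spec. intros m Hm. rewrite <- (ext_lt N j p w m) by nia. apply Eb. nia.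
      + rewrite lsumR_const. lra. }
  assert (Hsum : forall j p, lsumR (fun w => F (S j) (ext N j p w)) W <= F j p).
  { intros j p. unfold F.
    rewrite <- (is_series_unique _ _ (lsumR_series (fun w => wt (S j) (ext N j p w)) W (fun w => Hex _ _))).
    apply Series_le; [|apply Hex]. intros i. split; [|apply Hchild].
    clear Hchild. generalize W; intros l; induction l; cbn [lsumR]; [lra|]. destruct (Hwt (S j) (ext N j p a) i). lra. }
  assert (Hstep : forall j p, F j p < mu ^ j -> exists w, In w W /\ F (S j) (ext N j p w) < mu ^ (S j)).
  { intros j p Hlt. apply NNPP. intros Hn.
    assert (forall w, In w W -> mu ^ S j <= F (S j) (ext N j p w)).
    { intros w Hw. apply Rnot_lt_le. intros C. apply Hn. exists w; auto. }
    assert (lsumR (fun _ => mu ^ S j) W <= lsumR (fun w => F (S j) (ext N j p w)) W) by (apply lsumR_le; auto).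
    rewrite lsumR_const in H0. fold M in H0. simpl in H0. rewrite <- Rmult_assoc, HMmu in H0.
    specialize (Hsum j p). lra. }
  set (ch := fun j p => epsilon (inhabits nil) (fun w => In w W /\ F (S j) (ext N j p w) < mu ^ (S j))).
  assert (Hch : forall j p, F j p < mu ^ j -> In (ch j p) W /\ F (S j) (ext N j p (ch j p)) < mu ^ (S j)).
  { intros j p H. unfold ch. apply epsilon_spec. apply Hstep; auto. }
  apply Rnot_lt_le. intros Hlt.
  set (Pth := fix Pth (k : nat) : nat -> bool :=
         match k with 0 => fun _ => false | S k => ext N k (Pth k) (ch k (Pth k)) end).
  assert (HPS : forall k, Pth (S k) = ext N k (Pth k) (ch k (Pth k))) by reflexivity.
  assert (HP : forall k, F k (Pth k) < mu ^ k).
  { induction k.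
    - unfold F. replace (Series (wt 0%nat (Pth 0%nat))) with Ssum; [simpl; lra|].
      symmetry. apply is_series_unique. eapply is_series_ext; [|exact HS].
      intros i. unfold wt. simpl. auto.
    - rewrite HPS. apply Hch. auto. }
  assert (HPw : forall k, In (ch k (Pth k)) W) by (intros; apply Hch; auto).
  assert (Hmono : forall k k', (k <= k')%nat -> forall m, (m < k * N)%nat -> Pth k' m = Pth k m).
  { intros k k' Hk. induction Hk; auto. intros x Hx. rewrite HPS. rewrite ext_lt by nia. auto. }
  set (b := fun m => Pth (S (m / N)) m).
  assert (HN : (N > 0)%nat) by (unfold N, NN; lia).
  assert (Hb : forall k m, (m < k * N)%nat -> b m = Pth k m).
  { intros k m Hm. unfold b. assert (Hd := Nat.div_mod m N ltac:(lia)). assert (Hr := Nat.mod_upper_bound m N ltac:(lia)).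
    assert (m < S (m / N) * N)%nat by (simpl; lia).
    rewrite (Hmono (Nat.min k (S (m / N))) (S (m / N))) by lia.
    rewrite (Hmono (Nat.min k (S (m / N))) k) by lia. auto. }
  assert (HG : Good K be b).
  { intros j. fold N W. replace (map b (seq (j * N) N)) with (ch j (Pth j)); auto.
    destruct (Wb_word K be _ (HPw j)) as [Hl _]. fold N in Hl.
    apply nth_ext with (d := false) (d' := false).
    - rewrite length_map, length_seq; auto.
    - intros r Hr. rewrite nth_map_seq by lia. rewrite (Hb (S j)) by (simpl; lia).
      rewrite HPS, ext_ge. auto. }
  destruct (Hcov b HG) as [i Hi].
  specialize (HP (J i)).
  assert (wt (J i) (Pth (J i)) i = mu ^ (J i)).
  { unfold wt. rewrite Nat.min_id, Nat.max_id.
    replace (agreeb (J i * N) (Pth (J i)) (Q i)) with true; auto. symmetry. apply agreeb_spec.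
    intros m Hm. rewrite <- Hb by auto. apply Hi; auto. }
  assert (wt (J i) (Pth (J i)) i <= F (J i) (Pth (J i))).
  { unfold F. apply Series_ge_term; auto. intros; apply Hwt. }
  lra.
Qed.

Lemma exp_le' x y : x <= y -> exp x <= exp y.
Proof. intros [H|H]; [left; apply exp_increasing; auto| subst; lra]. Qed.

Lemma diam_pair U d x y : diam U = Finite d -> U x -> U y -> Rabs (x - y) <= d.
Proof.
  intros Hd Hx Hy. destruct (Lub_Rbar_correct (fun r => exists x y, U x /\ U y /\ r = Rabs (x - y))) as [Hub _].
  unfold diam in Hd. rewrite Hd in Hub. apply (Hub (Rabs (x - y))). exists x, y; auto.
Qed.

Lemma diam_fin U delta x0 : Rbar_le (diam U) (Finite delta) -> U x0 ->
  exists d, diam U = Finite d /\ 0 <= d.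
Proof.
  intros Hle Hx. destruct (Lub_Rbar_correct (fun r => exists x y, U x /\ U y /\ r = Rabs (x - y))) as [Hub _].
  assert (H0 : Rbar_le 0 (diam U)).
  { unfold diam. apply (Hub 0). exists x0, x0. repeat split; auto. rewrite Rminus_diag, Rabs_R0; auto. }
  destruct (diam U) as [d| |]; simpl in *; try tauto. exists d; auto.
Qed.

Lemma diam_pow_nonneg s U : 0 <= diam_pow s U.
Proof.
  unfold diam_pow. destruct (diam U); try lra.
  destruct Req_EM_T; [destruct Req_EM_T; lra|]. unfold Rpower. left; apply exp_pos.
Qed.

Definition dl (K : nat) : R := (/2) ^ (S (2 * NN K)).

Lemma Good_sep K be b b' n : Good K be b -> Good K be b' ->
  Rabs (pi b' - pi b) < dl K * (/2)^n -> forall m, (m < n)%nat -> b' m = b m.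
Proof.
  intros G G'. apply separation; eapply Good_Win; eauto.
Qed.

Lemma small_pow x e : 0 <= x < 1 -> 0 < e -> exists j, x ^ j <= e.
Proof.
  intros Hx He. destruct (pow_lt_1_zero x ltac:(rewrite Rabs_pos_eq; lra) e He) as [j Hj].
  exists j. specialize (Hj j (Nat.le_refl j)). rewrite Rabs_pos_eq in Hj by (apply pow_le; lra). lra.
Qed.

Lemma least_nat (P : nat -> Prop) : (exists n, P n) -> exists n, P n /\ forall m, (m < n)%nat -> ~ P m.
Proof.
  intros [n Hn]. revert Hn. induction n as [n IH] using (well_founded_induction Wf_nat.lt_wf). intros Hn.
  destruct (classic (exists m, (m < n)%nat /\ P m)) as [[m [Hm Pm]]|Hno].
  - apply (IH m Hm Pm).
  - exists n. split; auto. intros m Hm Pm. apply Hno. exists m; auto.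
Qed.

Definition muK (K : nat) (be : bool) : R := / INR (length (Wb K be)).

Lemma muK_bounds K be : 0 < muK K be <= /4.
Proof.
  unfold muK. rewrite Wb_length. assert (4 <= INR (2 ^ (2 * K + 2))).
  { replace 4 with (INR 4) by (simpl; ring). apply le_INR.
    replace (2 * K + 2)%nat with (2 + 2 * K)%nat by lia. rewrite Nat.pow_add_r. change (2^2)%nat with 4%nat.
    assert (1 <= 2 ^ (2 * K))%nat by (apply Nat.le_succ_l; apply Nat.neq_0_lt_0; apply Nat.pow_nonzero; lia). lia. }
  split; [apply Rinv_0_lt_compat; lra| apply Rinv_le_contravar; lra].
Qed.

Definition cK (K : nat) (s : R) : R := exp (INR (NN K) * s * ln 2) / Rpower (dl K) s.

Lemma cK_pos K s : 0 < cK K s.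
Proof. unfold cK, Rpower. apply Rdiv_lt_0_compat; apply exp_pos. Qed.

Lemma dl_pos K : 0 < dl K.
Proof. unfold dl. apply pow_lt; lra. Qed.

Lemma assign K be s delta U eps : 0 <= s -> 0 < eps ->
  INR (NN K) * s * ln 2 <= ln (INR (length (Wb K be))) ->
  Rbar_le (diam U) (Finite delta) ->
  exists j q, (forall b, Good K be b -> U (pi b) -> forall m, (m < j * NN K)%nat -> b m = q m) /\
    (muK K be) ^ j <= cK K s * diam_pow s U + eps.
Proof.
  intros Hs He HM Hd.
  assert (Hmu := muK_bounds K be).
  assert (Hc := cK_pos K s). assert (Hdp := diam_pow_nonneg s U).
  destruct (small_pow (muK K be) eps ltac:(lra) He) as [j0 Hj0].
  destruct (classic (exists b0, Good K be b0 /\ U (pi b0))) as [[b0 [G0 U0]]|Hno].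
  2:{ exists j0, (fun _ => false). split.
      - intros b G Ub. exfalso. apply Hno. exists b; auto.
      - assert (0 <= cK K s * diam_pow s U) by (apply Rmult_le_pos; lra). lra. }
  destruct (diam_fin U delta (pi b0) Hd U0) as [d [Ed Hd0]].
  destruct (Req_dec d 0) as [->|Hdnz].
  { exists j0, b0. split.
    - intros b G Ub m Hm. apply (Good_sep K be b0 b (S m) G0 G); [|lia].
      assert (Rabs (pi b - pi b0) <= 0) by (eapply diam_pair; eauto).
      assert (0 < dl K * (/2)^(S m)) by (apply Rmult_lt_0_compat; [apply dl_pos| apply pow_lt; lra]).
      lra.
    - assert (0 <= cK K s * diam_pow s U) by (apply Rmult_le_pos; lra). lra. }
  assert (Hdpos : 0 < d) by lra.
  set (N := NN K).
  assert (HN : (N > 0)%nat) by (unfold N, NN; lia).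
  destruct (least_nat (fun j => dl K * (/2)^((S j) * N) <= d)) as [j [Hj Hmin]].
  { destruct (small_pow (/2) (d / dl K) ltac:(lra) ltac:(apply Rdiv_lt_0_compat; [lra| apply dl_pos])) as [k Hk].
    exists k. assert (Hdl := dl_pos K).
    assert ((/2)^(S k * N) <= (/2)^k) by (apply half_le; nia).
    apply Rmult_le_reg_r with (/ dl K); [apply Rinv_0_lt_compat; lra|].
    replace (dl K * (/ 2) ^ (S k * N) * / dl K) with ((/2)^(S k * N)) by (field; lra).
    unfold Rdiv in Hk. lra. }
  exists j, b0. split.
  - intros b G Ub m Hm. destruct j as [|j']; [lia|].
    apply (Good_sep K be b0 b (S j' * N) G0 G); [|auto].
    assert (Rabs (pi b - pi b0) <= d) by (eapply diam_pair; eauto).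
    assert (~ (dl K * (/2)^(S j' * N) <= d)) by (apply Hmin; lia). lra.
  - unfold diam_pow. rewrite Ed. destruct Req_EM_T as [|_]; [lra|].
    assert (Hmuj : (muK K be) ^ j = exp (INR j * ln (muK K be))).
    { rewrite <- Rpower_pow by lra. reflexivity. }
    rewrite Hmuj. unfold cK, Rpower. unfold Rdiv.
    rewrite <- exp_Ropp, Rmult_assoc, <- exp_plus, <- exp_plus.
    assert (0 < eps) by auto. fold N.
    enough (exp (INR j * ln (muK K be)) <= exp (INR N * s * ln 2 + (- (s * ln (dl K)) + s * ln d))) by lra.
    apply exp_le'.
    assert (Hl2 : 0 < ln 2) by (rewrite <- ln_1; apply ln_increasing; lra).
    assert (Hlnmu : ln (muK K be) = - ln (INR (length (Wb K be)))).
    { unfold muK. apply ln_Rinv. rewrite Wb_length. apply lt_0_INR. apply Nat.neq_0_lt_0. apply Nat.pow_nonzero; lia. }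
    assert (Hlnd : ln (dl K) - INR (S j * N) * ln 2 <= ln d).
    { assert (0 < (/2)^(S j * N)) by (apply pow_lt; lra). assert (Hdl := dl_pos K).
      apply ln_le in Hj; [|apply Rmult_lt_0_compat; lra].
      rewrite ln_mult, ln_pow, ln_Rinv in Hj by lra. lra. }
    rewrite Hlnmu. fold N in HM.
    assert (Hj0' : 0 <= INR j) by apply pos_INR.
    rewrite mult_INR, S_INR in Hlnd.
    assert (s * (ln (dl K) - (INR j + 1) * INR N * ln 2) <= s * ln d) by (apply Rmult_le_compat_l; lra).
    assert (INR j * (INR N * s * ln 2) <= INR j * ln (INR (length (Wb K be)))) by (apply Rmult_le_compat_l; lra).
    nra.
Qed.

Lemma Good_S K be b : Good K be b ->
  0 <= pi b <= 1 /\ (if be then deriv_minfty takagi (pi b) else deriv_pinfty takagi (pi b)).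
Proof.
  intros G. split; [apply pi_range|].
  assert (HW := Good_Win K be b G).
  assert (Hd : forall k, dl K <= Rabs (tent_iter k (pi b) - 1/2)) by (intros; apply (dist_half _ b HW)).
  assert (Hp : forall k, 0 < Rabs (tent_iter k (pi b) - 1/2)).
  { intros k. eapply Rlt_le_trans; [apply dl_pos| apply Hd]. }
  assert (HD := Good_D K be b G).
  set (N := NN K) in *. assert (HN : (N > 0)%nat) by (unfold N, NN; lia).
  assert (Hgrow : forall M, exists N0, forall n, (n >= N0)%nat -> M < sgn be * Dsum n (pi b)).
  { intros M. destruct (INR_unbounded (M + INR N)) as [a Ha]. exists (a * N)%nat. intros n Hn.
    rewrite Dsum_pi by auto. specialize (HD n).
    assert (a <= n / N)%nat.
    { rewrite <- (Nat.div_mul a N) by lia. apply Nat.Div0.div_le_mono. lia. }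
    apply le_INR in H. lra. }
  destruct be.
  - apply (deriv_minus _ (dl K)); auto; [apply pi_range| apply dl_pos|].
    intros M. destruct (Hgrow (- M)) as [N0 HN0]. exists N0. intros n Hn. specialize (HN0 n Hn). simpl in HN0. lra.
  - apply (deriv_plus _ (dl K)); auto; [apply pi_range| apply dl_pos|].
    intros M. destruct (Hgrow M) as [N0 HN0]. exists N0. intros n Hn. specialize (HN0 n Hn). simpl in HN0. lra.
Qed.

Lemma content_lb K be s delta (A : R -> Prop) : 0 <= s ->
  INR (NN K) * s * ln 2 <= ln (INR (length (Wb K be))) ->
  (forall b, Good K be b -> A (pi b)) ->
  Rbar_le (Finite (/ cK K s)) (hausdorff_content s delta A).
Proof.
  intros Hs HM HA. unfold hausdorff_content.
  destruct (Glb_Rbar_correct (fun v : R => exists U : nat -> (R -> Prop),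
    (forall x, A x -> exists i, U i x) /\ (forall i, Rbar_le (diam (U i)) (Finite delta)) /\
    is_series (fun i => diam_pow s (U i)) v)) as [_ Hgl].
  apply Hgl. intros v [U [Hcov [Hdiam Hser]]]. simpl.
  assert (Hc := cK_pos K s).
  assert (Hmu := muK_bounds K be).
  cut (1 <= cK K s * v).
  { intros H. apply Rmult_le_reg_l with (cK K s); auto. rewrite Rinv_r by lra. lra. }
  apply Rnot_lt_le. intros Hlt. set (eps := (1 - cK K s * v) / 2).
  assert (Heps : 0 < eps) by (unfold eps; lra).
  set (P := fun i (p : nat * (nat -> bool)) =>
    (forall b, Good K be b -> U i (pi b) -> forall m, (m < fst p * NN K)%nat -> b m = snd p m) /\
    (muK K be) ^ (fst p) <= cK K s * diam_pow s (U i) + eps * (/2)^(S i)).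
  assert (HP : forall i, exists p, P i p).
  { intros i. destruct (assign K be s delta (U i) (eps * (/2)^(S i)) Hs) as [j [q [H1 H2]]]; auto.
    { apply Rmult_lt_0_compat; auto. apply pow_lt; lra. }
    exists (j, q). split; auto. }
  set (f := fun i => epsilon (inhabits (0%nat, fun _ : nat => false)) (P i)).
  assert (Hf : forall i, P i (f i)) by (intros; apply epsilon_spec; auto).
  set (J := fun i => fst (f i)). set (Q := fun i => snd (f i)).
  assert (Hbound : is_series (fun i => cK K s * diam_pow s (U i) + eps * (/2)^(S i)) (cK K s * v + eps * 1)).
  { apply (is_series_plus (fun i => cK K s * diam_pow s (U i)) (fun i => eps * (/2)^(S i))).
    - apply (is_series_scal_l (cK K s) (fun i => diam_pow s (U i))). auto.
    - apply (is_series_scal_l eps (fun i => (/2)^(S i))). apply geom_is. }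
  assert (Hex : ex_series (fun i => muK K be ^ J i)).
  { apply (@ex_series_le R_AbsRing R_CompleteNormedModule _ (fun i => cK K s * diam_pow s (U i) + eps * (/2)^(S i))); [|eexists; exact Hbound].
    intros i. change (Rabs (muK K be ^ J i) <= cK K s * diam_pow s (U i) + eps * (/2)^(S i)).
    rewrite Rabs_pos_eq by (apply pow_le; lra). apply (Hf i). }
  assert (Hle : Series (fun i => muK K be ^ J i) <= cK K s * v + eps * 1).
  { rewrite <- (is_series_unique _ _ Hbound). apply Series_le; [|eexists; exact Hbound].
    intros i. split; [apply pow_le; lra| apply (Hf i)]. }
  assert (H1 : 1 <= Series (fun i => muK K be ^ J i)).
  { apply (cover_mass K be J Q). { apply Series_correct. exact Hex. }
    intros b G. destruct (Hcov (pi b) (HA b G)) as [i Hi]. exists i. intros m Hm.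
    apply (proj1 (Hf i) b G Hi m Hm). }
  unfold eps in Hle. lra.
Qed.

Lemma measure_pos K be s (A : R -> Prop) : 0 <= s ->
  INR (NN K) * s * ln 2 <= ln (INR (length (Wb K be))) ->
  (forall b, Good K be b -> A (pi b)) ->
  hausdorff_measure s A <> Finite 0.
Proof.
  intros Hs HM HA E. unfold hausdorff_measure in E.
  destruct (Lub_Rbar_correct (fun v : R => exists delta, 0 < delta /\
    Rbar_le (Finite v) (hausdorff_content s delta A))) as [Hub _].
  rewrite E in Hub. assert (H := Hub (/ cK K s)).
  assert (0 < / cK K s) by (apply Rinv_0_lt_compat; apply cK_pos).
  simpl in H. enough (/ cK K s <= 0) by lra. apply H. exists 1. split; [lra|].
  apply (content_lb K be); auto.
Qed.

Lemma fin_series n c : is_series (fun i => if Nat.ltb i n then c else 0) (INR n * c).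
Proof.
  induction n.
  - simpl. replace (0 * c) with 0 by ring. eapply is_series_ext; [|apply zero_is].
    intros i. destruct (Nat.ltb_spec i 0); [lia| auto].
  - apply is_series_decr_1.
    match goal with |- is_series _ ?l => replace l with (INR n * c) end.
    + eapply is_series_ext; [|exact IHn]. intros i.
      replace (Nat.ltb (S i) (S n)) with (Nat.ltb i n) by (destruct (Nat.ltb_spec i n), (Nat.ltb_spec (S i) (S n)); auto; lia).
      auto.
    + cbn -[INR]. rewrite S_INR. unfold plus, opp; simpl. ring.
Qed.

Lemma pow_decr x m n : 0 <= x <= 1 -> (m <= n)%nat -> x ^ n <= x ^ m.
Proof.
  intros Hx H. induction H; [lra|]. simpl. assert (0 <= x ^ m0) by (apply pow_le; lra). nra.
Qed.

Lemma cover_interval h x : 0 < h -> forall n, (1 <= n)%nat -> 0 <= x <= INR n * h ->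
  exists i, (i < n)%nat /\ INR i * h <= x <= INR (S i) * h.
Proof.
  intros Hh n. induction n; intros Hn Hx; [lia|].
  destruct (Nat.eq_dec n 0) as [->|Hn0].
  - exists 0%nat. split; [lia|]. simpl in *. lra.
  - destruct (Rle_dec x (INR n * h)) as [Hl|Hl].
    + destruct (IHn ltac:(lia) ltac:(lra)) as [i [Hi Hi2]]. exists i. split; [lia|auto].
    + exists n. split; [lia| lra].
Qed.

Lemma diam_empty (U : R -> Prop) : (forall x, ~ U x) -> diam U = m_infty.
Proof.
  intros H. unfold diam. apply is_lub_Rbar_unique. split.
  - intros r [x [y [Hx _]]]. exfalso; eapply H; eauto.
  - intros b _. simpl. destruct b; auto.
Qed.

Lemma diam_le U h : (forall x y, U x -> U y -> Rabs (x - y) <= h) -> Rbar_le (diam U) (Finite h).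
Proof.
  intros H. unfold diam.
  destruct (Lub_Rbar_correct (fun r => exists x y, U x /\ U y /\ r = Rabs (x - y))) as [_ Hl].
  apply Hl. intros r [x [y [Hx [Hy ->]]]]. simpl. auto.
Qed.

Lemma content_zero s delta (A : R -> Prop) : 1 < s -> 0 < delta -> (forall x, A x -> 0 <= x <= 1) ->
  hausdorff_content s delta A = Finite 0.
Proof.
  intros Hs Hd HA. unfold hausdorff_content. apply is_glb_Rbar_unique.
  set (E := fun v : R => exists U : nat -> (R -> Prop),
    (forall x, A x -> exists i, U i x) /\ (forall i, Rbar_le (diam (U i)) (Finite delta)) /\
    is_series (fun i => diam_pow s (U i)) v).
  assert (Hnn : forall v, E v -> 0 <= v).
  { intros v [U [_ [_ Hv]]]. rewrite <- (is_series_unique _ _ Hv). apply Series_nonneg.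
    - eexists; eauto.
    - intros; apply diam_pow_nonneg. }
  assert (Hl2 : 0 < ln 2) by (rewrite <- ln_1; apply ln_increasing; lra).
  assert (Hsmall : forall eps, 0 < eps -> exists v, E v /\ v <= eps).
  { intros eps He.
    set (xx := exp (ln 2 * (1 - s))).
    assert (Hxx : 0 <= xx < 1).
    { unfold xx. split; [left; apply exp_pos|]. apply Rlt_le_trans with (exp 0); [|rewrite exp_0; lra]. apply exp_increasing. assert (0 < ln 2 * (s - 1)) by (apply Rmult_lt_0_compat; lra). lra. }
    destruct (small_pow (/2) delta ltac:(lra) Hd) as [k1 Hk1].
    destruct (small_pow xx eps Hxx He) as [k2 Hk2].
    set (k := Nat.max k1 k2).
    set (h := (/2)^k).
    assert (Hh : 0 < h) by (apply pow_lt; lra).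
    assert (Hhd : h <= delta) by (apply Rle_trans with ((/2)^k1); [apply half_le; unfold k; lia| exact Hk1]).
    set (U := fun i x => (i < 2 ^ k)%nat /\ INR i * h <= x <= INR (S i) * h).
    set (R0 := Rpower h s).
    assert (HR0 : 0 < R0) by (unfold R0, Rpower; apply exp_pos).
    assert (Hdp : forall i, 0 <= diam_pow s (U i) <= if Nat.ltb i (2 ^ k) then R0 else 0).
    { intros i. split; [apply diam_pow_nonneg|].
      destruct (Nat.ltb_spec i (2 ^ k)) as [Hi|Hi].
      - assert (Hdl : Rbar_le (diam (U i)) (Finite h)).
        { apply diam_le. intros x y [_ Hx] [_ Hy]. rewrite S_INR in *. apply Rabs_le. nra. }
        assert (Hui : U i (INR i * h)) by (split; auto; rewrite S_INR; nra).
        destruct (diam_fin (U i) h (INR i * h) Hdl Hui) as [d [Ed Hd0]].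
        unfold diam_pow. rewrite Ed. rewrite Ed in Hdl. simpl in Hdl.
        destruct Req_EM_T; [destruct Req_EM_T; lra|].
        unfold R0. apply Rle_Rpower_l; lra.
      - unfold diam_pow. rewrite (diam_empty (U i)) by (intros x [Hx _]; lia). lra. }
    assert (Hfs := fin_series (2 ^ k) R0).
    assert (Hex : ex_series (fun i => diam_pow s (U i))).
    { apply (@ex_series_le R_AbsRing R_CompleteNormedModule _ (fun i => if Nat.ltb i (2 ^ k) then R0 else 0)).
      - intros i. change (Rabs (diam_pow s (U i)) <= (if Nat.ltb i (2 ^ k) then R0 else 0)).
        destruct (Hdp i). rewrite Rabs_pos_eq; lra.
      - eexists; eauto. }
    exists (Series (fun i => diam_pow s (U i))). split.
    - exists U. repeat split.
      + intros x Hx. destruct (cover_interval h x Hh (2 ^ k) ltac:(apply Nat.le_succ_l; apply Nat.neq_0_lt_0; apply Nat.pow_nonzero; lia)) as [i [Hi Hi2]].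
        { rewrite pow_INR. unfold h. rewrite Rmult_comm, pow_inv2. simpl. apply HA; auto. }
        exists i. split; auto.
      + intros i. eapply (Rbar_le_trans _ (Finite h)); [|simpl; auto].
        apply diam_le. intros x y [_ Hx] [_ Hy]. rewrite S_INR in *. apply Rabs_le. nra.
      + apply Series_correct; auto.
    - apply Rle_trans with (INR (2 ^ k) * R0).
      { rewrite <- (is_series_unique _ _ Hfs). apply Series_le; [apply Hdp| eexists; eauto]. }
      assert (INR (2 ^ k) * R0 = xx ^ k).
      { rewrite pow_INR. replace (INR 2) with 2 by (simpl; ring).
        rewrite <- (Rpower_pow k xx) by (unfold xx; apply exp_pos).
        rewrite <- (Rpower_pow k 2) by lra. unfold R0, h, Rpower. rewrite <- exp_plus. f_equal.
        unfold xx. rewrite ln_exp. rewrite ln_pow, ln_Rinv by lra. ring. }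
      rewrite H. apply Rle_trans with (xx ^ k2); [apply pow_decr; [lra| unfold k; lia]| auto]. }
  split.
  - intros v Hv. simpl. apply Hnn; auto.
  - intros b Hb. destruct b as [l| |]; simpl; auto.
    + apply Rnot_lt_le. intros Hl. destruct (Hsmall (l / 2) ltac:(lra)) as [v [Ev Hv]].
      specialize (Hb v Ev). simpl in Hb. lra.
    + destruct (Hsmall 1 ltac:(lra)) as [v [Ev _]]. specialize (Hb v Ev). simpl in Hb. auto.
Qed.

Lemma measure_zero s (A : R -> Prop) : 1 < s -> (forall x, A x -> 0 <= x <= 1) ->
  hausdorff_measure s A = Finite 0.
Proof.
  intros Hs HA. unfold hausdorff_measure. apply is_lub_Rbar_unique. split.
  - intros v [delta [Hd Hv]]. rewrite content_zero in Hv by auto. simpl in *. auto.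
  - intros b Hb. apply Hb. exists 1. split; [lra|]. rewrite content_zero by (auto; lra). simpl. lra.
Qed.

Lemma dim_one (A : R -> Prop) :
  (forall s, 1 < s -> hausdorff_measure s A = Finite 0) ->
  (forall s, 0 <= s < 1 -> hausdorff_measure s A <> Finite 0) ->
  hausdorff_dim A = Finite 1.
Proof.
  intros H1 H2. unfold hausdorff_dim. apply is_glb_Rbar_unique. split.
  - intros s [Hs Hm]. simpl. apply Rnot_lt_le. intros Hl. apply (H2 s); auto.
  - intros b Hb. destruct b as [l| |]; simpl; auto.
    + apply Rnot_lt_le. intros Hl. set (s := (l + 1) / 2).
      assert (Hs : 0 <= s /\ hausdorff_measure s A = Finite 0) by (split; [unfold s; lra| apply H1; unfold s; lra]).
      specialize (Hb s Hs). simpl in Hb. unfold s in Hb. lra.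
    + apply (Hb 2). split; [lra| apply H1; lra].
Qed.

Lemma measure_pos' be (A : R -> Prop) :
  (forall K b, Good K be b -> A (pi b)) ->
  forall s, 0 <= s < 1 -> hausdorff_measure s A <> Finite 0.
Proof.
  intros HA s Hs.
  destruct (INR_unbounded (3 / (1 - s))) as [K HK].
  apply (measure_pos K be s A); [lra| |apply HA].
  rewrite Wb_length, pow_INR. replace (INR 2) with 2 by (simpl; ring). rewrite ln_pow by lra.
  assert (Hl2 : 0 < ln 2) by (rewrite <- ln_1; apply ln_increasing; lra).
  apply Rmult_le_compat_r; [lra|].
  unfold NN. rewrite !plus_INR, !mult_INR. simpl.
  assert (3 <= INR K * (1 - s)).
  { apply Rmult_lt_compat_r with (r := 1 - s) in HK; [|lra].
    replace (3 / (1 - s) * (1 - s)) with 3 in HK by (field; lra). lra. }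
  nra.
Qed.

Theorem corollary3 :
  hausdorff_dim S_pinf = Finite 1 /\ hausdorff_dim S_minf = Finite 1.
Proof.
  split; apply dim_one.
  - intros s Hs. apply measure_zero; auto. intros x [Hx _]; auto.
  - apply (measure_pos' false). intros K b G. destruct (Good_S K false b G) as [H1 H2]. split; auto.
  - intros s Hs. apply measure_zero; auto. intros x [Hx _]; auto.
  - apply (measure_pos' true). intros K b G. destruct (Good_S K true b G) as [H1 H2]. split; auto.
Qed.
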